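(* Let $n\ge1$, $L>0$, and let $\beta:\mathbb R\to\mathbb R$ be non-decreasing. Define, for $U$ in $$D(A)=\Big\{U\in L^\infty(0,L):\ \kappa_n(s)\frac{d^2U}{ds^2}\in L^\infty(0,L),\ \frac{dU}{ds}(L)=0,\ U(0)=0\Big\},$$ the operator $AU=\kappa_n(s)\,\beta\big(-\kappa_n(s)\frac{d^2U}{ds^2}\big)$. Then for all $U,V\in D(A)$ and $\lambda>0$, $$\big\|(U-V)_+\big\|_{L^\infty(0,L)}\le\big\|\big(U-V+\lambda(AU-AV)\big)_+\big\|_{L^\infty(0,L)}.$$
   Context: $\kappa_n(s)=n\omega_n^{1/n}s^{1/n'}$ with $n'=n/(n-1)$ and $\omega_n$ the volume of the unit ball of $\mathbb R^n$; $(\cdot)_+$ denotes the positive part. *)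

(* Defs.v *)
From HB Require Import structures.
From mathcomp Require Import all_boot all_order all_algebra.
From mathcomp Require Import all_classical all_reals all_analysis.
Set Implicit Arguments. Unset Strict Implicit. Unset Printing Implicit Defensive.
Import Order.TTheory GRing.Theory Num.Theory.
Import numFieldNormedType.Exports.
Local Open Scope classical_set_scope.
Local Open Scope ring_scope.

(* Volume of the unit ball of R^n: omega_0 = 1, omega_1 = 2,
   omega_(m+2) = 2 pi / (m+2) * omega_m. *)
Fixpoint omega {R : realType} (n : nat) : R :=
  match n with
  | 0%N => 1
  | 1%N => 2
  | (m.+2)%N => 2 * pi / (m.+2)%:R * omega m
  end.

Definition kappa {R : realType} (n : nat) (s : R) : R :=
  n%:R * (omega n `^ (n%:R)^-1) * (s `^ (1 - (n%:R)^-1)).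

Definition lebR {R : realType} := (@lebesgue_measure R).

Definition leb0L {R : realType} (L : R) :=
  mrestr (@lebesgue_measure R) (measurable_itv `]0, L[).

Definition LinfNorm {R : realType} (L : R) (f : R -> R) : \bar R :=
  Lnorm (leb0L L) +oo%E (EFin \o f).

Definition pos_part {R : realType} (x : R) : R := Num.max x 0.

(* Membership of U in D(A), with U1 the (continuous) derivative dU/ds on
   [0,L] and U2 a (Lebesgue integrable) representative of d^2U/ds^2:
   U is W^{2,1}(0,L), kappa_n U2 in L^infinity(0,L), U'(L) = 0, U(0) = 0. *)
Definition inDA {R : realType} (n : nat) (L : R) (U U1 U2 : R -> R) : Prop :=
  [/\ measurable_fun `[0, L] U2,
      lebR.-integrable `[0, L] (EFin \o U2),
      (LinfNorm L (fun s => (kappa n s * U2 s)%R) < +oo)%E,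
      (forall s, s \in `[0, L] -> U1 s = U1 L - Rintegral lebR `[s, L] U2) &
      (forall s, s \in `[0, L] -> U s = U 0 + Rintegral lebR `[0, s] U1)]
  /\ U1 L = 0 /\ U 0 = 0.

Definition opA {R : realType} (n : nat) (beta : R -> R) (U2 : R -> R) : R -> R :=
  fun s => kappa n s * beta (- (kappa n s * U2 s)).

(* Main.v *)
Require Import Defs.
From HB Require Import structures.
From mathcomp Require Import all_boot all_order all_algebra.
From mathcomp Require Import all_classical all_reals all_analysis.
From mathcomp Require Import lra.
Import Order.TTheory GRing.Theory Num.Theory.
Import numFieldNormedType.Exports.
Local Open Scope classical_set_scope.
Local Open Scope ring_scope.

Section H.
Context {R : realType}.
Notation mu := (@lebesgue_measure R).

Lemma omega_gt0 n : 0 < @omega R n.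
Proof.
suff : 0 < @omega R n /\ 0 < @omega R n.+1 by case.
elim: n => [|n [IH1 IH2]]; first by split => //=.
split => //=.
rewrite mulr_gt0 // divr_gt0 // ?mulr_gt0 ?pi_gt0 //.
Qed.

Lemma kappa_gt0 n s : (1 <= n)%N -> 0 < s -> 0 < @kappa R n s.
Proof.
move=> n1 s0; rewrite /kappa !mulr_gt0 ?powR_gt0 ?omega_gt0 //.
by rewrite ltr0n.
Qed.

Lemma int_pos (I : set R) g : measurable I -> mu.-integrable I (EFin \o g) ->
  (0 < mu I)%E ->
  (exists N, [/\ measurable N, mu N = 0%E & forall x, I x -> ~ N x -> 0 < g x]) ->
  0 < \int[mu]_(x in I) g x.
Proof.
move=> mI ig muI [N [mN muN gpos]].
have mJ : measurable (I `\` N) by exact: measurableD.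
have iJ : mu.-integrable (I `\` N) (EFin \o g) by apply: integrableS ig => // x [].
have -> : \int[mu]_(x in I) g x = \int[mu]_(x in I `\` N) g x.
  by rewrite /Rintegral (negligible_integral mN mI ig muN).
rewrite lt0r Rintegral_ge0 ?andbT; last by move=> x [Ix Nx]; exact/ltW/gpos.
apply/negP => /eqP H0.
have fin := @integrable_fin_num _ _ _ mu _ mJ _ iJ.
have H1 : (\int[mu]_(x in I `\` N) (EFin \o g) x = 0)%E.
  by rewrite -(fineK fin) /= -/(Rintegral _ _ _) H0.
have H2 : (\int[mu]_(x in I `\` N) `|(EFin \o g) x| = 0)%E.
  rewrite -H1; apply: eq_integral => x /set_mem [Ix Nx] /=.
  by rewrite ger0_norm // ltW // gpos.
have [mg _] := integrableP _ _ _ iJ.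
have [N2 [mN2 muN2 sub]] := (@ae_eq_integral_abs _ _ _ mu _ mJ _ mg).1 H2.
have JN2 : I `\` N `<=` N2.
  move=> x [Ix Nx]; apply: sub => /= H; have := H (conj Ix Nx).
  by move=> [] /eqP; rewrite gt_eqF // gpos.
have : (mu I <= mu N2 + mu N)%E.
  apply: le_trans (measureU2 mu mN2 mN).
  apply: le_measure; rewrite ?inE //; first exact: measurableU.
  by move=> x Ix; case: (pselect (N x)) => Nx; [right|left; apply: JN2].
by rewrite muN2 muN adde0 leNgt muI.
Qed.

Lemma tail_eq (g : R -> R) L s : 0 <= s -> s <= L ->
  mu.-integrable `[0, L] (EFin \o g) ->
  \int[mu]_(t in `[s, L]) g t = \int[mu]_(t in `[0, L]) g t - \int[mu]_(t in `[0, s]) g t.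
Proof.
move=> s0 sL ig.
rewrite -Rintegral_itv_obnd_cbnd; last first.
  by apply: integrableS ig => //; apply: subset_itvr; rewrite bnd_simp.
by rewrite Rintegral_itvB // bnd_simp.
Qed.

Lemma tail_cont (g : R -> R) L : 0 <= L ->
  mu.-integrable `[0, L] (EFin \o g) ->
  {within `[0, L], continuous (fun s => \int[mu]_(t in `[s, L]) g t)}.
Proof.
move=> L0 ig.
set f := (fun s => \int[mu]_(t in `[0, L]) g t - \int[mu]_(t in `[0, s]) g t).
have e : {in [set` `[0, L]], f =1 (fun s => \int[mu]_(t in `[s, L]) g t)}.
  move=> s; rewrite inE /= in_itv /= => /andP[s0 sL].
  by rewrite tail_eq.
have c : {within `[0, L], continuous f}.
  apply: within_continuousB; first by move=> x; exact: cvg_cst.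
  exact: parameterized_integral_continuous.
exact: (@subspace_eq_continuous _ [set` `[0, L]] _ f _ e c).
Qed.

Lemma reg n L (U U1 U2 : R -> R) : 0 < L -> inDA n L U U1 U2 ->
  [/\ mu.-integrable `[0, L] (EFin \o U2),
      {in `[0, L], forall s, U1 s = - \int[mu]_(t in `[s, L]) U2 t},
      mu.-integrable `[0, L] (EFin \o U1) &
      {in `[0, L], forall s, U s = \int[mu]_(t in `[0, s]) U1 t}].
Proof.
move=> L0 [[_ iU2 _ hU1 hU] [U1L U0]].
have e1 : {in `[0, L], forall s, U1 s = - \int[mu]_(t in `[s, L]) U2 t}.
  by move=> s sI; rewrite hU1 // U1L sub0r.
split => //.
- apply: continuous_compact_integrable; first exact: segment_compact.
  set f := (fun s => 0 - \int[mu]_(t in `[s, L]) U2 t).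
  have e : {in [set` `[0, L]], f =1 U1}.
    by move=> s; rewrite inE /= => sI; rewrite e1 // /f sub0r.
  have c : {within `[0, L], continuous f}.
    apply: within_continuousB; first by move=> x; exact: cvg_cst.
    exact: tail_cont (ltW L0) iU2.
  exact: (@subspace_eq_continuous _ [set` `[0, L]] _ f _ e c).
- by move=> s sI; rewrite hU // U0 add0r.
Qed.

Lemma W1_rel (W1 W2 : R -> R) L t u : 0 <= t -> t <= u -> u <= L ->
  mu.-integrable `[0, L] (EFin \o W2) ->
  {in `[0, L], forall s, W1 s = - \int[mu]_(t in `[s, L]) W2 t} ->
  W1 t = W1 u - \int[mu]_(x in `[t, u[) W2 x.
Proof.
move=> t0 tu uL iW2 hW1.
have u0 := le_trans t0 tu; have tL := le_trans tu uL.
rewrite !hW1 ?in_itv /= ?t0 ?tL ?u0 ?uL //.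
have itL : mu.-integrable `[t, L] (EFin \o W2).
  by apply: integrableS iW2 => //; apply: subset_itvr; rewrite bnd_simp.
rewrite Rintegral_itv_bndo_bndc; last first.
  by apply: integrableS itL => //; apply: subset_itvl; rewrite bnd_simp.
have := Rintegral_itvB itL (x := u); rewrite !bnd_simp => /(_ tu uL).
rewrite Rintegral_itv_obnd_cbnd; last first.
  by apply: integrableS itL => //; apply: subset_itvr; rewrite bnd_simp.
move=> <-; lra.
Qed.

Lemma W_rel (W W1 : R -> R) L t u : 0 <= t -> t <= u -> u <= L ->
  mu.-integrable `[0, L] (EFin \o W1) ->
  {in `[0, L], forall s, W s = \int[mu]_(t in `[0, s]) W1 t} ->
  W u - W t = \int[mu]_(x in `]t, u]) W1 x.
Proof.
move=> t0 tu uL iW1 hW.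
have u0 := le_trans t0 tu; have tL := le_trans tu uL.
rewrite !hW ?in_itv /= ?t0 ?tL ?u0 ?uL //.
have i0u : mu.-integrable `[0, u] (EFin \o W1).
  by apply: integrableS iW1 => //; apply: subset_itvl; rewrite bnd_simp.
by rewrite (Rintegral_itvB i0u) // bnd_simp.
Qed.

Lemma int_neg (I : set R) g : measurable I -> mu.-integrable I (EFin \o g) ->
  (0 < mu I)%E -> (forall x, I x -> g x < 0) ->
  \int[mu]_(x in I) g x < 0.
Proof.
move=> mI ig muI gneg.
have ig' : mu.-integrable I (EFin \o (fun x => -1 * g x)).
  have := @integrableZl _ _ _ mu _ mI (-1) _ ig.
  by apply: eq_integrable => // x _ /=; rewrite EFinM.
have := @int_pos I _ mI ig' muI.
rewrite RintegralZl //.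
have hp : forall x, I x -> ~ set0 x -> 0 < -1 * g x.
  by move=> x Ix _; rewrite mulN1r oppr_gt0; exact: gneg.
move=> H; have := H (ex_intro _ set0 (And3 measurable0 (measure0 _) hp)).
lra.
Qed.

Lemma core L r (W W1 W2 : R -> R) (N : set R) :
  0 < L -> 0 <= r ->
  mu.-integrable `[0, L] (EFin \o W2) -> mu.-integrable `[0, L] (EFin \o W1) ->
  {in `[0, L], forall s, W1 s = - \int[mu]_(t in `[s, L]) W2 t} ->
  {in `[0, L], forall s, W s = \int[mu]_(t in `[0, s]) W1 t} ->
  measurable N -> mu N = 0%E ->
  (forall x, 0 < x -> x < L -> ~ N x -> r < W x -> 0 < W2 x) ->
  forall s, s \in `[0, L] -> W s <= r.
Proof.
move=> L0 r0 iW2 iW1 hW1 hW mN muN pos.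
have cW : {within `[0, L], continuous W}.
  have e : {in [set` `[0, L]], (fun s => \int[mu]_(t in `[0, s]) W1 t) =1 W}.
    by move=> s; rewrite inE /= => sI; rewrite hW.
  exact: (@subspace_eq_continuous _ _ _ _ _ e (parameterized_integral_continuous (ltW L0) iW1)).
have [s0 s0I smax] := EVT_max (ltW L0) cW.
suff : W s0 <= r by move=> H s sI; exact: le_trans (smax s sI) H.
rewrite leNgt; apply/negP => rW.
have W0 : W 0 = 0.
  by rewrite hW ?set_itv1 ?Rintegral_set1 // in_itv /= lexx ltW.
have s0pos : 0 < s0.
  move: (s0I); rewrite in_itv /= => /andP[]; rewrite le_eqVlt => /predU1P[s00 _|//].
  by move: rW; rewrite -s00 W0 ltNge r0.
move: (s0I); rewrite in_itv /= => /andP[_ s0L].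
have := (@subspace_continuousP _ [set` `[0, L]] _ W).1 cW s0 s0I.
move=> /(cvgr_gt (W s0)) /(_ r rW).
move=> /nbhs_ballP [d /= d0 hd].
have near : forall t, 0 <= t -> t <= L -> `|s0 - t| < d -> r < W t.
  move=> t t0 tL std; apply: hd; last by rewrite /= in_itv /= t0 tL.
  by rewrite /ball /=.
have W1L : W1 L = 0.
  rewrite hW1; last by rewrite in_itv /= lexx (ltW L0).
  by rewrite set_itv1 Rintegral_set1 oppr0.
have [W1s0|W1s0] := leP (W1 s0) 0.
-
  set a := Num.max (s0 / 2) (s0 - d / 2).
  have a0 : 0 < a by rewrite lt_max divr_gt0.
  have as0 : a < s0.
    by rewrite gt_max; apply/andP; split; lra.
  have sad : s0 - a < d.
    have : s0 - d / 2 <= a by rewrite le_max lexx orbT.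
    move=> h; lra.
  have W1neg : forall t, a <= t -> t < s0 -> W1 t < 0.
    move=> t ta ts.
    rewrite (@W1_rel W1 W2 L t s0) //; [|lra|lra].
    suff : 0 < \int[mu]_(x in `[t, s0[) W2 x by lra.
    apply: int_pos => //.
    + by apply: integrableS iW2 => //; apply: subset_itvScc; rewrite bnd_simp; lra.
    + by rewrite lebesgue_measure_itv /= lte_fin ts -EFinD lte_fin subr_gt0.
    + exists N; split => // x; rewrite /= in_itv /= => /andP[tx xs] Nx.
      apply: pos => //; [lra|lra|].
      apply: near; [lra|lra|]; rewrite ger0_norm; lra.
  have := @W_rel W W1 L a s0 (ltW a0) (ltW as0) s0L iW1 hW.
  rewrite -Rintegral_itv_bndo_bndc; last first.
    by apply: integrableS iW1 => //; apply: subset_itvScc; rewrite bnd_simp; lra.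
  have : \int[mu]_(x in `]a, s0[) W1 x < 0.
    apply: int_neg => //.
    + by apply: integrableS iW1 => //; apply: subset_itvScc; rewrite bnd_simp; lra.
    + by rewrite lebesgue_measure_itv /= lte_fin as0 -EFinD lte_fin subr_gt0.
    + by move=> x; rewrite /= in_itv /= => /andP[ax xs]; apply: W1neg; lra.
  have : W a <= W s0 by apply: smax; rewrite in_itv /=; apply/andP; split; lra.
  lra.
-
  have s0L' : s0 < L.
    rewrite lt_neqAle s0L andbT; apply/negP => /eqP e.
    by move: W1s0; rewrite e W1L ltxx.
  set b := Num.min L (s0 + d / 2).
  have bL : b <= L by rewrite ge_min lexx.
  have s0b : s0 < b by rewrite lt_min; apply/andP; split; lra.
  have bsd : b - s0 < d.
    have : b <= s0 + d / 2 by rewrite ge_min lexx orbT.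
    move=> h; lra.
  have W1pos : forall t, s0 < t -> t <= b -> 0 < W1 t.
    move=> t st tb.
    have := @W1_rel W1 W2 L s0 t (ltW s0pos) (ltW st) (le_trans tb bL) iW2 hW1.
    suff : 0 < \int[mu]_(x in `[s0, t[) W2 x by lra.
    apply: int_pos => //.
    + by apply: integrableS iW2 => //; apply: subset_itvScc; rewrite bnd_simp; lra.
    + by rewrite lebesgue_measure_itv /= lte_fin st -EFinD lte_fin subr_gt0.
    + exists N; split => // x; rewrite /= in_itv /= => /andP[tx xs] Nx.
      apply: pos => //; [lra|lra|].
      apply: near; [lra|lra|]; rewrite distrC ger0_norm; lra.
  have := @W_rel W W1 L s0 b (ltW s0pos) (ltW s0b) bL iW1 hW.
  have : 0 < \int[mu]_(x in `]s0, b]) W1 x.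
    apply: int_pos => //.
    + by apply: integrableS iW1 => //; apply: subset_itvScc; rewrite bnd_simp; lra.
    + by rewrite lebesgue_measure_itv /= lte_fin s0b -EFinD lte_fin subr_gt0.
    + exists set0; split => // x; rewrite /= in_itv /= => /andP[ax xs] _.
      by apply: W1pos.
  have : W b <= W s0 by apply: smax; rewrite in_itv /=; apply/andP; split; lra.
  lra.
Qed.

End H.

Theorem lemma2 (R : realType) (n : nat) (L : R) (beta : R -> R)
  (U U1 U2 V V1 V2 : R -> R) (lambda : R) :
  (1 <= n)%N -> 0 < L -> {homo beta : x y / x <= y} ->
  inDA n L U U1 U2 -> inDA n L V V1 V2 -> 0 < lambda ->
  (LinfNorm L (fun s => pos_part (U s - V s))
   <= LinfNorm L (fun s => pos_part (U s - V s
        + lambda * (opA n beta U2 s - opA n beta V2 s))))%E.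
Proof.
move=> n1 L0 bmono hU hV lam0.
have [iU2 hU1 iU1 hUU] := @reg R n L U U1 U2 L0 hU.
have [iV2 hV1 iV1 hVV] := @reg R n L V V1 V2 L0 hV.
set h := (fun s => pos_part (U s - V s + lambda * (opA n beta U2 s - opA n beta V2 s))).
rewrite /LinfNorm unlock.
have muT : (0 < leb0L L [set: R])%E.
  by rewrite /leb0L /mrestr setTI lebesgue_measure_itv /= lte_fin L0 sube0 lte_fin.
rewrite muT.
set S := ess_sup_inf.ess_sup (leb0L L) (abse \o (EFin \o h)).
have S0 : (0 <= S)%E.
  by apply: ess_sup_inf.ess_sup_gee => //; apply: aeW => x /=.
have [->|Soo] := eqVneq S +oo%E; first exact: leey.
have Sfin : S \is a fin_num by rewrite ge0_fin_numE // ltey.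
set r := fine S.
have Sr : S = r%:E%E by rewrite fineK.
have r0 : (0 <= r)%R by rewrite -lee_fin -Sr.
set W := fun s => U s - V s.
set W1 := fun s => U1 s - V1 s.
set W2 := fun s => U2 s - V2 s.
have mI : measurable (`[0, L] : set R) by exact: measurable_itv.
have iB : forall f g : R -> R, lebesgue_measure.-integrable `[0, L] (EFin \o f) ->
    lebesgue_measure.-integrable `[0, L] (EFin \o g) ->
    lebesgue_measure.-integrable `[0, L] (EFin \o (fun s => f s - g s)).
  move=> f g jf jg.
  have := @integrableB _ _ _ lebesgue_measure _ mI _ _ jf jg.
  by apply: eq_integrable => // x _ /=; rewrite EFinB.
have iW2 := iB _ _ iU2 iV2.
have iW1 := iB _ _ iU1 iV1.
have hW1 : {in `[0, L], forall s, W1 s = - \int[lebesgue_measure]_(t in `[s, L]) W2 t}.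
  move=> s sI; rewrite /W1 /W2 hU1 // hV1 // RintegralB //.
  - lra.
  - apply: integrableS iU2 => //; apply: subset_itvScc; rewrite ?bnd_simp //.
    by move: sI; rewrite in_itv /= => /andP[].
  - apply: integrableS iV2 => //; apply: subset_itvScc; rewrite ?bnd_simp //.
    by move: sI; rewrite in_itv /= => /andP[].
have hW : {in `[0, L], forall s, W s = \int[lebesgue_measure]_(t in `[0, s]) W1 t}.
  move=> s sI; rewrite /W /W1 hUU // hVV // RintegralB //.
  - apply: integrableS iU1 => //; apply: subset_itvScc; rewrite ?bnd_simp //.
    by move: sI; rewrite in_itv /= => /andP[].
  - apply: integrableS iV1 => //; apply: subset_itvScc; rewrite ?bnd_simp //.
    by move: sI; rewrite in_itv /= => /andP[].
have [A [mA A0 sA]] := ess_sup_inf.ess_sup_ge (leb0L L) (abse \o (EFin \o h)).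
have mN : measurable (A `&` `]0, L[) by apply: measurableI => //; exact: measurable_itv.
have N0 : lebesgue_measure (A `&` `]0, L[) = 0%E by exact: A0.
have Wr := @core R L r W W1 W2 _ L0 r0 iW2 iW1 hW1 hW mN N0.
have {}Wr : forall s, s \in `[0, L] -> W s <= r.
  apply: Wr => x x0 xL Nx rWx.
  have xA : ~ A x by move=> Ax; apply: Nx; split => //; rewrite /= in_itv /= x0 xL.
  have Px : ((abse \o (EFin \o h)) x <= S)%E.
    by apply: contrapT => nP; apply: xA; exact: sA.
  move: Px; rewrite Sr /= lee_fin => hr.
  have hx : W x + lambda * (opA n beta U2 x - opA n beta V2 x) <= h x.
    by rewrite /h /pos_part le_max lexx.
  have hx2 : h x <= `|h x| by exact: ler_norm.
  have : lambda * (opA n beta U2 x - opA n beta V2 x) < 0 by lra.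
  rewrite pmulr_rlt0 // /opA -mulrBr pmulr_rlt0 ?kappa_gt0 // subr_lt0 => hb.
  rewrite /W2 subr_gt0.
  have k0 := @kappa_gt0 R n x n1 x0.
  rewrite -(ltr_pM2l k0) -ltrN2.
  rewrite ltNge; apply/negP => /bmono; rewrite leNgt hb.
  done.
apply/ess_sup_inf.ess_supP.
exists (~` `]0, L[); split.
- by apply: measurableC; exact: measurable_itv.
- rewrite /leb0L /mrestr /=.
  have E : (~` `]0, L[ `&` `]0, L[) = set0 :> set R by rewrite setICl.
  by unfold mrestr; rewrite E; exact: measure0.
- move=> x /= nP Ix; apply: nP.
  rewrite Sr /= lee_fin ger0_norm; last by rewrite /pos_part le_max lexx orbT.
  rewrite /pos_part ge_max r0 andbT.
  apply: Wr; move: Ix; rewrite /= !in_itv /= => /andP[? ?].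
  by apply/andP; split; apply: ltW.
Qed.
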